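(* In the setting described in the context, with $\alpha>0$, for every $\xi\in\mathcal{L}^*$ we have $$\limsup_{\eta\to\xi}\frac{|F_\psi(\xi)-F_\psi(\eta)|}{|\xi-\eta|^\alpha}=\infty.$$
   Context: Setting: $X\subset\mathbb{R}$ compact connected, $A=\{0,\dots,d\}$, $f_a:X\to\mathrm{Int}X$ differentiable contractions satisfying strong separation ($f_a(\mathrm{Int}X)\subset\mathrm{Int}X$, $f_a(X)\cap f_b(X)=\emptyset$ for $a\ne b$) and the Hölder condition ($C^{1+\epsilon}$ diffeomorphic extensions $\tilde f_a$ to an open interval $Y\supset X$ with $\tilde f_a(Y)\subset Y$); $f_0(X)$ is the leftmost and $f_1(X)$ the rightmost interval among the $f_a(X)$. Limit set $\mathcal{L}=\bigcap_n\bigcup_{\omega\in A^n}f_\omega(X)$, identified with $A^{\mathbb{N}}$ via the coding map; cylinders $[x_1\dots x_n]$; Birkhoff sums $S_ng=\sum_{k<n}g\circ\sigma^k$. $\phi(\xi)=\log|f'_{x_1}(\xi)|$. Pressure $P(g)=\lim_n\frac1n\log\sum_{\omega\in A^n}\exp(\sup_{[\omega]}S_ng)$. $\psi$ is Hölder continuous with $\psi<0$, $P(\psi)=0$, $\psi>\alpha\phi$; $\nu_\psi$ is its Gibbs measure ($\nu_\psi([\omega])\asymp e^{S_n\psi(\xi)}$ uniformly for $\xi\in[\omega]$, $\omega\in A^n$), and $F_\psi(x)=\nu_\psi((-\infty,x])$, $x\in\mathbb{R}$. $\mathcal{E}$ is the set of $(x_1x_2\dots)\in\mathcal{L}$ for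 which there are $i\in\{0,1\}$ and $n$ with $x_k=i$ for all $k\ge n$, and $\mathcal{L}^*=\mathcal{L}\setminus\mathcal{E}$. *)

(* Defs.v *)
From HB Require Import structures.
From mathcomp Require Import all_boot all_order all_algebra.
From mathcomp Require Import all_classical all_reals all_analysis.
Set Implicit Arguments. Unset Strict Implicit. Unset Printing Implicit Defensive.
Import Order.TTheory GRing.Theory Num.Theory.
Import numFieldNormedType.Exports.
Local Open Scope classical_set_scope.
Local Open Scope ring_scope.

(* The alphabet A = {0,...,d} is 'I_d.+1 ; sequences x_1 x_2 ... are
   nat -> 'I_d.+1 with x_{k+1} = xi k. *)

(* symbol 1 of the alphabet (needs d >= 1) *)
Definition sym1 (d : nat) : 'I_d.+1 := inord 1.

Definition fw {R : realType} {d : nat} (f : 'I_d.+1 -> R -> R)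
  (w : seq 'I_d.+1) : R -> R := foldr (fun a g => f a \o g) id w.

Definition pref {d : nat} (xi : nat -> 'I_d.+1) (n : nat) : seq 'I_d.+1 :=
  mkseq xi n.

Definition shift {d : nat} (xi : nat -> 'I_d.+1) : nat -> 'I_d.+1 :=
  fun i => xi i.+1.

Definition birkhoff {R : realType} {d : nat} (g : (nat -> 'I_d.+1) -> R)
  (n : nat) (xi : nat -> 'I_d.+1) : R :=
  \sum_(k < n) g (iter k shift xi).

Definition limit_set {R : realType} {d : nat} (f : 'I_d.+1 -> R -> R)
  (X : set R) : set R :=
  [set x | forall n, exists w : n.-tuple 'I_d.+1, (fw f w @` X) x].

Definition coding {R : realType} {d : nat} (f : 'I_d.+1 -> R -> R)
  (X : set R) (xi : nat -> 'I_d.+1) : R :=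
  xget 0 [set x | forall n, (fw f (pref xi n) @` X) x].

Definition geom_pot {R : realType} {d : nat} (f : 'I_d.+1 -> R -> R)
  (X : set R) (xi : nat -> 'I_d.+1) : R :=
  ln `| derive1 (f (xi 0%N)) (coding f X (shift xi)) |.

Definition cyl {d : nat} (n : nat) (w : n.-tuple 'I_d.+1) : set (nat -> 'I_d.+1) :=
  [set xi | forall i : 'I_n, xi i = tnth w i].

Definition pressure_seq {R : realType} {d : nat} (g : (nat -> 'I_d.+1) -> R)
  (n : nat) : R :=
  n%:R^-1 * ln (\sum_(w : n.-tuple 'I_d.+1)
                  expR (sup [set birkhoff g n xi | xi in cyl w])).

(* Hoelder continuity on the symbolic space A^N (w.r.t. the metrics theta^{|xi ^ eta|}) *)
Definition symb_hoelder {R : realType} {d : nat} (g : (nat -> 'I_d.+1) -> R) : Prop :=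
  exists (C theta : R), 0 < theta < 1 /\
    forall (n : nat) (xi eta : nat -> 'I_d.+1),
      (forall i, (i < n)%N -> xi i = eta i) -> `|g xi - g eta| <= C * theta ^+ n.

(* the standing assumptions on X, f (f a is the C^{1+eps} extension tilde f_a,
   whose restriction to X is f_a) *)
Definition ifs_setting {R : realType} {d : nat} (X Y : set R)
  (f : 'I_d.+1 -> R -> R) : Prop :=
  ((1 <= d)%N /\ compact X /\ connected X /\ X !=set0) /\
    (
      (forall a, f a @` X `<=` interior X /\
         exists c : R, 0 <= c < 1 /\
           forall x y, X x -> X y -> `|f a x - f a y| <= c * `|x - y|)) /\
    (
      (forall a, f a @` interior X `<=` interior X) /\
      (forall a b, a != b -> f a @` X `&` f b @` X = set0)) /\
    (
      [/\ open Y, connected Y, X `<=` Y &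
       forall a, [/\ f a @` Y `<=` Y, {in Y &, injective (f a)},
         (forall x, Y x -> derivable (f a) x 1 /\ derive1 (f a) x != 0) &
         exists eps K : R, 0 < eps /\
           forall x y, Y x -> Y y ->
             `|derive1 (f a) x - derive1 (f a) y| <= K * `|x - y| `^ eps]]) /\
    (
      (forall a, a != ord0 -> forall x y, (f ord0 @` X) x -> (f a @` X) y -> x < y) /\
      (forall a, a != sym1 d -> forall x y, (f a @` X) x -> (f (sym1 d) @` X) y -> x < y)).

Definition eventually_01 {d : nat} (xi : nat -> 'I_d.+1) : Prop :=
  exists (i : 'I_d.+1), (i = ord0 \/ i = sym1 d) /\
    exists m, forall k, (m <= k)%N -> xi k = i.

(* Gibbs measure for psi, as a Borel probability measure on R carried by L
   (= the push-forward under the coding map of the measure on A^N) *)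
Definition gibbs_measure {R : realType} {d : nat} (f : 'I_d.+1 -> R -> R)
  (X : set R) (psi : (nat -> 'I_d.+1) -> R) (mu : {measure set R -> \bar R}) : Prop :=
  mu setT = 1%E /\ mu (~` limit_set f X) = 0%E /\
  exists C : R, 1 <= C /\
    forall (n : nat) (xi : nat -> 'I_d.+1),
      (C^-1 * expR (birkhoff psi n xi) <= fine (mu (fw f (pref xi n) @` X)))%R /\
      (fine (mu (fw f (pref xi n) @` X)) <= C * expR (birkhoff psi n xi))%R.

Definition distrF {R : realType} (mu : {measure set R -> \bar R}) (x : R) : R :=
  fine (mu [set y | y <= x]).

(* Main.v *)
From Pilot Require Import Defs.
From HB Require Import structures.
From mathcomp Require Import all_boot all_order all_algebra.
From mathcomp Require Import all_classical all_reals all_analysis.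
From mathcomp Require Import ring lra.
From Stdlib Require Classical_Prop Classical_Pred_Type.
Import Order.TTheory GRing.Theory Num.Theory.
Import numFieldNormedType.Exports.
Local Open Scope classical_set_scope.
Local Open Scope ring_scope.
From mathcomp Require Import measurable_realfun.
Import Pilot.Defs.

Lemma fin_lt_bound (R : realType) (T : finType) (F : T -> R) (b : R) :
  (forall a, F a < b) -> exists c, c < b /\ forall a, F a <= c.
Proof.
move=> H.
suff : forall s : seq T, exists c, c < b /\ forall a, a \in s -> F a <= c.
  by case/(_ (enum T)) => c [cb Hc]; exists c; split => // a; apply: Hc; rewrite mem_enum.
elim=> [|x s [c [cb Hc]]]; first by exists (b - 1); split => //; rewrite ltrBlDr ltrDl.
exists (Num.max (F x) c); split; first by rewrite gt_max cb H.
move=> a; rewrite inE => /orP [/eqP ->|/Hc Fa]; first by rewrite le_max lexx.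
by rewrite le_max Fa orbT.
Qed.

Lemma lip_within (R : realType) (A : set R) (g : R -> R) (k : R) :
  (forall x y, A x -> A y -> `|g x - g y| <= k * `|x - y|) -> {within A, continuous g}.
Proof.
move=> Hg; apply/subspace_continuousP => x Ax.
apply/cvgrPdist_le => e e0.
have k1 : 0 < `|k| + 1 by rewrite ltr_wpDl.
rewrite near_withinE; apply/nbhs_ballP; exists (e / (`|k| + 1)) => /=.
  by rewrite divr_gt0.
move=> t; rewrite -ball_normE /= => xt At.
apply: le_trans (Hg _ _ Ax At) _.
apply: (@le_trans _ _ ((`|k| + 1) * `|x - t|)).
  apply: ler_wpM2r => //; apply: le_trans (ler_norm k) _; rewrite lerDl //.
by rewrite mulrC -ler_pdivlMr // ltW.
Qed.

Section FW.
Variables (R : realType) (d : nat) (X : set R) (f : 'I_d.+1 -> R -> R) (c D : R).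
Hypothesis c01 : 0 < c < 1.
Hypothesis hfX : forall a x, X x -> X (f a x).
Hypothesis hcon : forall a x y, X x -> X y -> `|f a x - f a y| <= c * `|x - y|.
Hypothesis hD : forall x y, X x -> X y -> `|x - y| <= D.

Lemma fw_cons a w x : fw f (a :: w) x = f a (fw f w x). Proof. by []. Qed.
Lemma fw_nil x : fw f [::] x = x. Proof. by []. Qed.

Lemma fw_cat w1 w2 x : fw f (w1 ++ w2) x = fw f w1 (fw f w2 x).
Proof. by elim: w1 => [//|a w1 IH]; rewrite cat_cons !fw_cons IH. Qed.

Lemma fw_X w x : X x -> X (fw f w x).
Proof. by elim: w => [//|a w IH] Xx; rewrite fw_cons; apply: hfX; apply: IH. Qed.

Lemma fw_lip w x y : X x -> X y -> `|fw f w x - fw f w y| <= c ^+ size w * `|x - y|.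
Proof.
elim: w => [|a w IH] Xx Xy; first by rewrite expr0 mul1r.
rewrite !fw_cons; apply: le_trans (hcon _ _ _ (fw_X _ _ Xx) (fw_X _ _ Xy)) _.
rewrite /= exprS -mulrA ler_wpM2l //; first by case/andP: c01 => /ltW.
exact: IH.
Qed.

Lemma fw_diam w x y : X x -> X y -> `|fw f w x - fw f w y| <= c ^+ size w * D.
Proof.
move=> Xx Xy; apply: le_trans (fw_lip _ _ _ Xx Xy) _.
rewrite ler_wpM2l //; last exact: hD.
by rewrite exprn_ge0 //; case/andP: c01 => /ltW.
Qed.

Lemma iter_shift k (xi : nat -> 'I_d.+1) i : iter k shift xi i = xi (k + i)%N.
Proof. by elim: k i => [//|k IH] i; rewrite iterS /shift IH addnS. Qed.

Lemma pref_add (xi : nat -> 'I_d.+1) k m :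
  pref xi (k + m) = pref xi k ++ pref (iter k shift xi) m.
Proof.
rewrite /pref /mkseq iotaD map_cat add0n; congr (_ ++ _).
rewrite -[in iota k m](addn0 k) iotaDl -map_comp; apply: eq_map => i /=.
by rewrite iter_shift.
Qed.

Lemma size_pref (xi : nat -> 'I_d.+1) n : size (pref xi n) = n.
Proof. exact: size_mkseq. Qed.

Definition Icyl (xi : nat -> 'I_d.+1) n := fw f (pref xi n) @` X.

Lemma Icyl_sub xi n m : (n <= m)%N -> Icyl xi m `<=` Icyl xi n.
Proof.
move=> nm p [x Xx <-]; rewrite -(subnKC nm) pref_add fw_cat.
by exists (fw f (pref (iter n shift xi) (m - n)) x) => //; apply: fw_X.
Qed.

Lemma Icyl_diam xi n p q : Icyl xi n p -> Icyl xi n q -> `|p - q| <= c ^+ n * D.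
Proof.
move=> [x Xx <-] [y Xy <-]; have := fw_diam (pref xi n) _ _ Xx Xy; rewrite size_pref; exact.
Qed.

Hypothesis Xcomp : compact X.
Hypothesis Xne : X !=set0.

Lemma fw_closed w : closed (fw f w @` X).
Proof.
apply: compact_closed; first exact: Rhausdorff.
apply: continuous_compact => //; apply: (@lip_within _ _ _ (c ^+ size w)).
by move=> x y; apply: fw_lip.
Qed.

Lemma coding_in xi n : Icyl xi n (coding f X xi).
Proof.
rewrite /coding; set P := (X in xget _ X).
suff [x Px] : exists x, P x by have := xgetPex 0 (ex_intro _ x Px); apply.
have := Xcomp; rewrite compact_In0 => /(_ nat setT (Icyl xi)) [].
- exists (Icyl xi) => [i _|i _]; first exact: fw_closed.
  apply/seteqP; split => [p Ip|p [] //]; split => //.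
  by case: Ip => x Xx <-; apply: fw_X.
- move=> D' _; case: Xne => x0 Xx0.
  exists (fw f (pref xi (\max_(i <- finmap.enum_fset D') i)) x0) => i /= iD.
  have Hle : (i <= \max_(j <- finmap.enum_fset D') j)%N by apply: leq_bigmax_seq.
  have H2 := Icyl_sub xi _ _ Hle; apply: H2; by exists x0.
- by move=> x Hx; exists x => k; apply: Hx.
Qed.

Variables (Y : set R) (h : nat -> R).
Hypothesis hXY : X `<=` Y.
Hypothesis hder : forall a x, Y x -> derivable (f a) x 1.
Hypothesis hconv : forall x y z, X x -> X y -> x <= z <= y -> X z.
Hypothesis hh0 : forall j, 0 <= h j.
Hypothesis hh : forall j a u v, X u -> X v -> `|u - v| <= c ^+ j * D ->
  `|derive1 (f a) u - derive1 (f a) v| <= h j.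

Lemma mvt_step a U V z0 j : X U -> X V -> X z0 ->
  `|U - z0| <= c ^+ j * D -> `|V - z0| <= c ^+ j * D ->
  `|f a U - f a V| <= (`|derive1 (f a) z0| + h j) * `|U - V|.
Proof.
move=> XU XV Xz hU hV.
have key : forall u v, X u -> X v -> `|u - z0| <= c ^+ j * D ->
    `|v - z0| <= c ^+ j * D -> u < v ->
    `|f a u - f a v| <= (`|derive1 (f a) z0| + h j) * `|u - v|.
  move=> u v Xu Xv hu hv uv.
  have [e eUV Heq] : exists2 e, e \in `]u, v[ &
      f a v - f a u = derive1 (f a) e * (v - u).
    apply: MVT => //.
    - move=> x; rewrite in_itv /= => /andP [ux xv].
      have Xx : X x by apply: (hconv _ _ _ Xu Xv); rewrite !ltW.
      by rewrite derive1E; apply: derivableP; apply: hder; apply: hXY.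
    - apply: continuous_in_subspaceT => x; rewrite inE /= in_itv /= => /andP [ux xv].
      have Xx : X x by apply: (hconv _ _ _ Xu Xv); rewrite ux xv.
      apply: differentiable_continuous; apply/derivable1_diffP; apply: hder.
      exact: hXY.
  move: eUV; rewrite in_itv /= => /andP [ue ev].
  have Xe : X e by apply: (hconv _ _ _ Xu Xv); rewrite !ltW.
  rewrite distrC Heq normrM [`|v - u|]distrC ler_wpM2r //.
  have he : `|e - z0| <= c ^+ j * D.
    move: hu hv; rewrite !ler_norml => /andP [h1 h2] /andP [h3 h4].
    apply/andP; split; lra.
  have H := hh j a _ _ Xe Xz he.
  have := ler_normD (derive1 (f a) z0) (derive1 (f a) e - derive1 (f a) z0).
  rewrite addrC subrK => H1; apply: le_trans H1 _; rewrite lerD2l; exact: H.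
have [UV|UV|UV] := ltgtP U V.
- exact: key.
- by rewrite distrC [`|U - V|]distrC; apply: key.
- by rewrite UV !subrr normr0 mulr0.
Qed.

Lemma distortion (w : seq 'I_d.+1) (z : nat -> R) :
  (forall k, (k < size w)%N -> (fw f (drop k.+1 w) @` X) (z k)) ->
  forall x y, X x -> X y ->
  `|fw f w x - fw f w y| <= `|x - y| *
     \prod_(k < size w) (`|derive1 (f (nth ord0 w k)) (z k)| + h (size w - k.+1)).
Proof.
elim: w z => [|a w IH] z Hz x y Xx Xy; first by rewrite big_ord0 mulr1.
have E : \prod_(k < size (a :: w)) (`|derive1 (f (nth ord0 (a :: w) k)) (z k)| + h (size (a :: w) - k.+1))
   = (`|derive1 (f a) (z 0%N)| + h (size w)) * \prod_(k < size w) (`|derive1 (f (nth ord0 w k)) (z k.+1)| + h (size w - k.+1)).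
  rewrite big_ord_recl; congr (_ * _); first by rewrite subn1.
rewrite E !fw_cons.
have [t Xt zt] := Hz 0%N isT; rewrite drop1 /= in zt.
have Hz' : forall k, (k < size w)%N -> (fw f (drop k.+1 w) @` X) (z k.+1).
  by move=> k kw; exact: (Hz k.+1 kw).
have IH' := IH (fun k => z k.+1) Hz' x y Xx Xy.
apply: le_trans.
  apply: (@mvt_step a _ _ (z 0%N) (size w)).
  - exact: fw_X.
  - exact: fw_X.
  - by rewrite -zt; apply: fw_X.
  - by rewrite -zt; apply: fw_diam.
  - by rewrite -zt; apply: fw_diam.
rewrite mulrCA ler_wpM2l //; first by rewrite addr_ge0.
Qed.

End FW.

Lemma konig (T : finType) (t0 : T) (s : nat -> nat -> T) :
  exists z : nat -> T, forall n N, exists j, (N <= j)%N /\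
    forall i, (i < n)%N -> s j i = z i.
Proof.
pose Inf (w : seq T) := forall N, exists j, (N <= j)%N /\
  forall i, (i < size w)%N -> s j i = nth t0 w i.
have step : forall w, Inf w -> exists a, Inf (rcons w a).
  move=> w Iw; apply: Classical_Prop.NNPP => H.
  have H' : forall a, exists N, ~ exists j, (N <= j)%N /\
      forall i, (i < size (rcons w a))%N -> s j i = nth t0 (rcons w a) i.
    move=> a; apply: Classical_Pred_Type.not_all_ex_not => Ha; apply: H.
    by exists a.
  have [Nf HN] := choice H'.
  have [j [Nj Hj]] := Iw (\max_a Nf a).
  apply: (HN (s j (size w))); exists j; split.
    exact: leq_trans (@leq_bigmax _ Nf (s j (size w))) Nj.
  move=> i; rewrite size_rcons ltnS leq_eqVlt => /orP [/eqP ->|iw].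
    by rewrite nth_rcons ltnn eqxx.
  by rewrite nth_rcons iw; apply: Hj.
pose nxt (w : seq T) := xget t0 [set a | Inf (rcons w a)].
pose W := fix W (n : nat) : seq T := if n is n'.+1 then rcons (W n') (nxt (W n')) else [::].
have sizeW : forall n, size (W n) = n.
  by elim=> [//|n IH]; rewrite [W n.+1]/= size_rcons IH.
have InfW : forall n, Inf (W n).
  elim=> [|n IH] /=; first by move=> N; exists N.
  exact: (xgetPex t0 (step _ IH)).
pose z i := nth t0 (W i.+1) i.
have Wz : forall k i, nth t0 (W (i.+1 + k)%N) i = z i.
  move=> k i; elim: k => [|k IH]; first by rewrite addn0.
  rewrite addnS.
  have -> : W (i.+1 + k).+1 = rcons (W (i.+1 + k)%N) (nxt (W (i.+1 + k)%N)) by [].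
  rewrite nth_rcons sizeW.
  by have -> : (i < i.+1 + k)%N by rewrite ltnS leq_addr.
exists z => n N; have [j [Nj Hj]] := InfW n N.
exists j; split => // i ilt; rewrite Hj ?sizeW //.
by rewrite -(subnKC ilt) Wz.
Qed.

Lemma unif_pos (R : realType) (T : finType) (t0 : T) (g : (nat -> T) -> R) :
  (forall z, 0 < g z) ->
  (forall tau, 0 < tau -> exists n, forall z z',
     (forall i, (i < n)%N -> z i = z' i) -> `|g z - g z'| <= tau) ->
  exists c1, 0 < c1 /\ forall z, c1 <= g z.
Proof.
move=> gpos gcont; apply: Classical_Prop.NNPP => H.
have H1 : forall j : nat, exists z, g z < (j.+1%:R)^-1.
  move=> j; apply: Classical_Prop.NNPP => Hj; apply: H.
  exists (j.+1%:R)^-1; split; first by rewrite invr_gt0 ltr0n.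
  move=> z; rewrite leNgt; apply/negP => Hz; apply: Hj; by exists z.
have [s Hs] := choice H1.
have [z Hz] := konig T t0 s.
have gz := gpos z.
have gz2 : 0 < g z / 2 by rewrite divr_gt0.
have [n Hn] := gcont _ gz2.
pose N := Num.Def.archi_bound ((g z / 2)^-1).
have HN : (N.+1%:R)^-1 < g z / 2.
  rewrite invf_plt ?posrE ?ltr0n //.
  apply: lt_le_trans (archi_boundP _) _; first by rewrite invr_ge0 ltW.
  by rewrite ler_nat.
have [j [Nj Hj]] := Hz n N.
have h1 : `|g z - g (s j)| <= g z / 2 by apply: Hn => i /Hj ->.
have h2 : (j.+1%:R)^-1 <= (N.+1%:R)^-1 :> R.
  by rewrite lef_pV2 ?posrE ?ltr0n // ler_nat ltnS.
have h3 := Hs j.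
move: h1; rewrite ler_norml => /andP [_ h1].
move: h2 h3 HN h1; set a := (j.+1%:R)^-1; set b := (N.+1%:R)^-1.
move: a b => a b h2 h3 HN h1.
have : g z < g z by lra.
by rewrite ltxx.
Qed.

Section Setup.
Variables (R : realType) (d : nat) (X Y : set R) (f : 'I_d.+1 -> R -> R).
Hypothesis HS : ifs_setting X Y f.

Lemma S_comp : compact X.
Proof. by have [[_ [Xc _]] _] := HS. Qed.
Lemma S_ne : X !=set0.
Proof. by have [[_ [_ [_ Xne]]] _] := HS. Qed.
Lemma S_XY : X `<=` Y.
Proof. by have [_ [_ [_ [[_ _ XY _] _]]]] := HS. Qed.
Lemma S_der a x : Y x -> derivable (f a) x 1.
Proof. by have [_ [_ [_ [[_ _ _ HY] _]]]] := HS; have [_ _ H _] := HY a => /H []. Qed.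
Lemma S_der0 a x : Y x -> derive1 (f a) x != 0.
Proof. by have [_ [_ [_ [[_ _ _ HY] _]]]] := HS; have [_ _ H _] := HY a => /H []. Qed.
Lemma S_conv x y z : X x -> X y -> x <= z <= y -> X z.
Proof.
have [[_ [_ [Xco _]]] _] := HS; move: Xco => /connected_intervalP Hi.
by move=> Xx Xy; apply: Hi.
Qed.
Lemma S_fX a x : X x -> X (f a x).
Proof.
have [_ [Hc _]] := HS; move=> Xx; apply: interior_subset.
by have [H _] := Hc a; apply: H; exists x.
Qed.

Lemma S_contr : exists c, 0 < c < 1 /\
  forall a x y, X x -> X y -> `|f a x - f a y| <= c * `|x - y|.
Proof.
have [_ [Hc _]] := HS.
have H : forall a, exists c, (0 <= c < 1) /\ forall x y, X x -> X y ->
    `|f a x - f a y| <= c * `|x - y|.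
  by move=> a; have [_ [c Hc']] := Hc a; exists c.
have [cf Hcf] := choice H.
have cf1 : forall a, cf a < 1 by move=> a; case: (Hcf a) => /andP [].
have [cm [cm1 Hcm]] := fin_lt_bound _ _ _ _ cf1.
exists (Num.max (2^-1) cm); split.
  apply/andP; split; first by rewrite lt_max invr_gt0 ltr0n.
  by rewrite gt_max cm1 andbT invf_lt1 // ltr1n.
move=> a x y Xx Xy; apply: le_trans (proj2 (Hcf a) x y Xx Xy) _.
by apply: ler_wpM2r => //; rewrite le_max Hcm orbT.
Qed.

Lemma S_diam : exists D, 0 < D /\ forall x y, X x -> X y -> `|x - y| <= D.
Proof.
have := compact_bounded S_comp; rewrite /bounded_near => -[M [Mr HM]].
have HM1 := HM (`|M| + 1) (lt_le_trans (ltr_pwDr ltr01 (real_ler_norm Mr)) (lexx _)).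
exists (2 * (`|M| + 1)); split; first by rewrite mulr_gt0 // ltr_pwDr.
move=> x y Xx Xy; apply: le_trans (ler_normB _ _) _.
have := HM1 x Xx; have := HM1 y Xy; rewrite /= => h1 h2; lra.
Qed.

Lemma S_hold c D : 0 < c < 1 -> 0 < D -> exists B q, 0 <= B /\ 0 <= q < 1 /\
  forall j a u v, X u -> X v -> `|u - v| <= c ^+ j * D ->
    `|derive1 (f a) u - derive1 (f a) v| <= B * q ^+ j.
Proof.
move=> /andP [c0 c1] D0.
have [_ [_ [_ [[_ _ XY HY] _]]]] := HS.
have H : forall a, exists p : R * R, 0 < p.1 /\ forall x y, Y x -> Y y ->
    `|derive1 (f a) x - derive1 (f a) y| <= p.2 * `|x - y| `^ p.1.
  by move=> a; have [_ _ _ [e [K [e0 HK]]]] := HY a; exists (e, K).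
have [pf Hpf] := choice H.
pose ep a := (pf a).1; pose Kf a := (pf a).2.
have lnc : ln c < 0 by apply: ln_lt0; rewrite c0 c1.
have Hl : forall a, expR (ep a * ln c) < 1.
  by move=> a; rewrite expR_lt1 pmulr_rlt0 //; exact: (Hpf a).1.
have [q [q1 Hq]] := fin_lt_bound _ _ _ _ Hl.
have q0 : 0 <= q by apply: le_trans (expR_ge0 _) (Hq ord0).
exists (\sum_a `|Kf a| * expR (ep a * ln D)), q; split.
  by apply: sumr_ge0 => a _; rewrite mulr_ge0 // expR_ge0.
split; first by rewrite q0 q1.
move=> j a u v Xu Xv huv.
have [e0 HK] := Hpf a.
apply: le_trans (HK u v (XY _ Xu) (XY _ Xv)) _.
have Bq0 : 0 <= (\sum_a `|Kf a| * expR (ep a * ln D)) * q ^+ j.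
  by rewrite mulr_ge0 ?exprn_ge0 // sumr_ge0 // => b _; rewrite mulr_ge0 // expR_ge0.
have [uv|uv] := eqVneq u v.
  by rewrite uv subrr normr0 powR0 ?mulr0 // gt_eqF.
have cjD : 0 < c ^+ j * D by rewrite mulr_gt0 // exprn_gt0.
apply: (@le_trans _ _ (`|Kf a| * (c ^+ j * D) `^ ep a)).
  apply: le_trans (_ : `|Kf a| * `|u - v| `^ ep a <= _).
    by apply: ler_wpM2r; [exact: powR_ge0 | exact: ler_norm].
  apply: ler_wpM2l => //; apply: ge0_ler_powR => //; first exact: ltW.
  by rewrite nnegrE ltW.
have -> : (c ^+ j * D) `^ ep a = expR (ep a * ln c) ^+ j * expR (ep a * ln D).
  rewrite /powR gt_eqF // lnM ?posrE ?exprn_gt0 // lnXn // mulrDr expRD.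
  by rewrite mulrnAr -mulr_natr expRM_natr.
rewrite mulrA [X in X <= _]mulrAC.
apply: ler_pM.
- by rewrite mulr_ge0 // expR_ge0.
- by rewrite exprn_ge0 // expR_ge0.
- by rewrite (bigD1 a) //= lerDl sumr_ge0 // => b _; rewrite mulr_ge0 // expR_ge0.
- by apply: lerXn2r; rewrite ?nnegrE ?expR_ge0.
Qed.

End Setup.


Lemma geo_small (R : realType) (K q tau : R) : 0 <= q < 1 -> 0 < tau ->
  exists N, forall n, (N <= n)%N -> K * q ^+ n <= tau.
Proof.
move=> /andP [q0 q1] tau0.
have Hq : `|q| < 1 by rewrite ger0_norm.
have k1 : 0 < `|K| + 1 by rewrite ltr_wpDl.
have := cvg_expr Hq; move/cvgrPdist_le => /(_ (tau / (`|K| + 1))).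
move=> /(_ (divr_gt0 tau0 k1)) [N _ HN].
exists N => n Nn; have := HN n Nn; rewrite sub0r normrN ger0_norm ?exprn_ge0 // => H.
apply: le_trans (ler_wpM2r (exprn_ge0 _ q0) (ler_norm K)) _.
apply: (@le_trans _ _ ((`|K| + 1) * q ^+ n)).
  by apply: ler_wpM2r; [exact: exprn_ge0 | rewrite lerDl].
by rewrite -ler_pdivlMl // mulrC.
Qed.

Lemma expR_lip (R : realType) (a b : R) : a <= 0 -> b <= 0 ->
  `|expR a - expR b| <= `|a - b|.
Proof.
wlog ab : a b / a <= b.
  move=> H a0 b0; case: (leP a b) => [ab|/ltW ba]; first exact: H.
  by rewrite distrC [`|a - b|]distrC; apply: H.
move=> a0 b0.
rewrite distrC [`|a - b|]distrC ger0_norm ?subr_ge0 ?ler_expR //.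
rewrite ger0_norm ?subr_ge0 //.
have h1 := expR_ge1Dx (a - b).
have h2 : expR b <= 1 by rewrite -expR0 ler_expR.
have h3 : expR (a - b) <= 1 by rewrite -expR0 ler_expR subr_le0.
have h4 := expR_ge0 b.
have -> : expR a = expR b * expR (a - b) by rewrite -expRD addrC subrK.
move: h1 h2 h3 h4; set u := expR b; set v := expR (a - b) => h1 h2 h3 h4.
nra.
Qed.

Lemma powR_exprn (R : realType) (x a : R) n : 0 < x -> (x ^+ n) `^ a = (x `^ a) ^+ n.
Proof.
move=> x0; rewrite /powR !gt_eqF ?exprn_gt0 // lnXn //.
by rewrite mulrnAr -mulr_natr expRM_natr.
Qed.

Lemma pref_eq d (z z' : nat -> 'I_d.+1) n :
  (forall i, (i < n)%N -> z i = z' i) -> pref z n = pref z' n.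
Proof.
move=> H; rewrite /pref /mkseq; apply/eq_in_map => i.
by rewrite mem_iota add0n => /andP [_ ilt]; apply: H.
Qed.

Lemma mu_fin (R : realType) (mu : {measure set R -> \bar R}) (A : set R) :
  mu setT = 1%E -> measurable A -> mu A = (fine (mu A))%:E /\ 0 <= fine (mu A).
Proof.
move=> m1 mA.
have h0 : (0 <= mu A)%E := measure_ge0 mu A.
have h1 : (mu A <= 1)%E by rewrite -m1; apply: le_measure; rewrite ?inE //; exact: measurableT.
have fA : mu A \is a fin_num by rewrite ge0_fin_numE // (le_lt_trans h1) // ltey.
by rewrite fineK //; split => //; apply: fine_ge0.
Qed.

Lemma mass_split (R : realType) (mu : {measure set R -> \bar R}) (I : set R) (p r : R) :
  mu setT = 1%E -> measurable I -> 0 < r -> (forall y, I y -> `|y - p| <= r) ->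
  exists eta, `|p - eta| = 2 * r /\
    fine (mu I) / 2 <= `|distrF mu p - distrF mu eta|.
Proof.
move=> m1 mI r0 HI.
have mle : forall x, measurable [set y : R | y <= x].
  move=> x; have -> : [set y : R | y <= x] = [set` `]-oo, x]] .
    by apply/seteqP; split => y; rewrite /= in_itv.
  exact: measurable_itv.
pose Am := [set` `]p - 2 * r, p]].
pose Bm := [set` `]p, p + 2 * r]].
have mA : measurable Am by exact: measurable_itv.
have mB : measurable Bm by exact: measurable_itv.
have e1 : [set y : R | y <= p] = [set y | y <= p - 2 * r] `|` Am.
  apply/seteqP; split => y /=.
    move=> yp; case: (leP y (p - 2 * r)) => hy; [by left | right].
    by rewrite /Am /= in_itv /= hy yp.
  by case => [|]; rewrite ?/Am /= ?in_itv /=; [lra | move=> /andP [? ?]; lra].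
have d1 : [set y : R | y <= p - 2 * r] `&` Am = set0.
  clear m1; apply/seteqP; split => y //= [h]; rewrite /Am /= in_itv /= => /andP [h' _]; lra.
have e2 : [set y : R | y <= p + 2 * r] = [set y | y <= p] `|` Bm.
  apply/seteqP; split => y /=.
    move=> yp; case: (leP y p) => hy; [by left | right].
    by rewrite /Bm /= in_itv /= hy yp.
  by case => [|]; rewrite ?/Bm /= ?in_itv /=; [lra | move=> /andP [? ?]; lra].
have d2 : [set y : R | y <= p] `&` Bm = set0.
  clear m1; apply/seteqP; split => y //= [h]; rewrite /Bm /= in_itv /= => /andP [h' _]; lra.
have d3 : Am `&` Bm = set0.
  clear m1; apply/seteqP; split => y //= []; rewrite /Am /Bm /= !in_itv /= => /andP [_ h] /andP [h' _]; lra.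
have sI : I `<=` Am `|` Bm.
  clear m1; move=> y /HI; rewrite ler_norml => /andP [hy1 hy2].
  case: (leP y p) => hy; [left | right]; rewrite /Am /Bm /= in_itv /=; apply/andP; split; lra.
have [hI fI0] := mu_fin R mu I m1 mI.
have [hA fA0] := mu_fin R mu Am m1 mA.
have [hB fB0] := mu_fin R mu Bm m1 mB.
have [h1 _] := mu_fin R mu _ m1 (mle (p - 2 * r)).
have [h2 _] := mu_fin R mu _ m1 (mle p).
have [h3 _] := mu_fin R mu _ m1 (mle (p + 2 * r)).
have E1 : fine (mu [set y | y <= p]) = fine (mu [set y | y <= p - 2 * r]) + fine (mu Am).
  have := measureU mu (mle (p - 2 * r)) mA d1; rewrite -e1 => H.
  by apply/eqP; rewrite -eqe EFinD -h2 -h1 -hA H.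
have E2 : fine (mu [set y | y <= p + 2 * r]) = fine (mu [set y | y <= p]) + fine (mu Bm).
  have := measureU mu (mle p) mB d2; rewrite -e2 => H.
  by apply/eqP; rewrite -eqe EFinD -h3 -h2 -hB H.
have E3 : fine (mu I) <= fine (mu Am) + fine (mu Bm).
  have hU := measureU mu mA mB d3.
  have : (mu I <= mu (Am `|` Bm))%E.
    by apply: le_measure => //; rewrite inE //; exact: measurableU.
  move=> hle; rewrite -lee_fin EFinD -hI -hA -hB; apply: le_trans hle _; rewrite hU; exact: lexx.
rewrite /distrF.
have [ha|ha] := leP (fine (mu I) / 2) (fine (mu Am)).
  exists (p - 2 * r); split.
    have -> : p - (p - 2 * r) = 2 * r by ring.
    by rewrite ger0_norm // mulr_ge0 // ltW.
  by rewrite E1 addrC addKr ger0_norm.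
exists (p + 2 * r); split.
  have -> : p - (p + 2 * r) = - (2 * r) by ring.
  by rewrite normrN ger0_norm // mulr_ge0 // ltW.
rewrite E2 opprD addrA subrr add0r normrN ger0_norm //.
clear hI hA hB h1 h2 h3 m1; lra.
Qed.

Lemma quarter_half (R : realType) (u v : R) : 0 < u -> 0 < v -> u / 4 * v < u * v / 2.
Proof. move=> u0 v0; have := mulr_gt0 u0 v0; nra. Qed.

Section Main.
Variables (R : realType) (d : nat) (X Y : set R) (f : 'I_d.+1 -> R -> R)
  (psi : (nat -> 'I_d.+1) -> R) (mu : {measure set R -> \bar R}) (alpha : R)
  (c D B q : R).
Hypothesis HS : ifs_setting X Y f.
Hypothesis c01 : 0 < c < 1.
Hypothesis hcon : forall a x y, X x -> X y -> `|f a x - f a y| <= c * `|x - y|.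
Hypothesis D0 : 0 < D.
Hypothesis hD : forall x y, X x -> X y -> `|x - y| <= D.
Hypothesis B0 : 0 <= B.
Hypothesis q01 : 0 <= q < 1.
Hypothesis hh : forall j a u v, X u -> X v -> `|u - v| <= c ^+ j * D ->
    `|derive1 (f a) u - derive1 (f a) v| <= B * q ^+ j.
Hypothesis Hpsi : symb_hoelder psi.
Hypothesis psi_neg : forall xi, psi xi < 0.
Hypothesis al0 : 0 < alpha.
Hypothesis Hgeo : forall xi, alpha * geom_pot f X xi < psi xi.
Hypothesis Hgibbs : gibbs_measure f X psi mu.

Let hfX := S_fX R d X Y f HS.
Let cod_in xi n : Icyl R d X f xi n (coding f X xi) :=
  coding_in R d X f c c01 hfX hcon (S_comp R d X Y f HS) (S_ne R d X Y f HS) xi n.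

Lemma cod_X xi : X (coding f X xi).
Proof. by have [x Xx <-] := cod_in xi 0. Qed.

Lemma der_pos (ze : nat -> 'I_d.+1) :
  0 < `|derive1 (f (ze 0%N)) (coding f X (shift ze))|.
Proof.
by rewrite normr_gt0; apply: (S_der0 R d X Y f HS); apply: (S_XY R d X Y f HS); apply: cod_X.
Qed.

Let g (ze : nat -> 'I_d.+1) :=
  expR (psi ze / alpha) - `|derive1 (f (ze 0%N)) (coding f X (shift ze))|.

Lemma g_pos ze : 0 < g ze.
Proof.
have h := Hgeo ze; rewrite /geom_pot in h.
set A := `|derive1 (f (ze 0%N)) (coding f X (shift ze))| in h *.
have hl : ln A < psi ze / alpha by rewrite ltr_pdivlMr // mulrC.
have E : expR (ln A) = A by rewrite lnK // posrE; exact: der_pos.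
by rewrite /g -/A subr_gt0 -E ltr_expR.
Qed.

Lemma e_lt1 ze : expR (psi ze / alpha) < 1.
Proof. by rewrite expR_lt1 ltr_pdivrMr // mul0r. Qed.

Lemma g_lt1 ze : g ze < 1.
Proof.
apply: le_lt_trans (e_lt1 ze); rewrite /g lerBlDr lerDl; exact: normr_ge0.
Qed.

Lemma g_cont tau : 0 < tau -> exists n, forall z z',
  (forall i, (i < n)%N -> z i = z' i) -> `|g z - g z'| <= tau.
Proof.
move=> tau0; have tau2 : 0 < tau / 2 by rewrite divr_gt0.
have [Cp [th [th01 HC]]] := Hpsi.
have th01' : 0 <= th < 1 by case/andP: th01 => h1 h2; rewrite ltW.
have [N1 HN1] := geo_small _ (Cp / alpha) _ _ th01' tau2.
have [N2 HN2] := geo_small _ B _ _ q01 tau2.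
exists (N1 + N2).+1 => z z' Hzz.
set m := (N1 + N2)%N.
have z0 : z 0%N = z' 0%N by apply: Hzz.
have Hpref : pref (shift z) m = pref (shift z') m.
  by apply: pref_eq => i im; apply: Hzz; rewrite ltnS.
have h1 : `|expR (psi z / alpha) - expR (psi z' / alpha)| <= tau / 2.
  have n1 : psi z / alpha <= 0 by rewrite ltW // ltr_pdivrMr // mul0r.
  have n2 : psi z' / alpha <= 0 by rewrite ltW // ltr_pdivrMr // mul0r.
  apply: le_trans (expR_lip _ _ _ n1 n2) _.
  rewrite -mulrBl normrM [`|alpha^-1|]gtr0_norm ?invr_gt0 //.
  apply: le_trans (_ : Cp * th ^+ m.+1 / alpha <= _).
    by rewrite ler_pM2r ?invr_gt0 //; apply: HC.
  by rewrite mulrAC; apply: HN1; apply: leq_trans (leq_addr N2 N1) (leqnSn _).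
have Pz := cod_in (shift z) m; have Pz' := cod_in (shift z') m.
rewrite /Icyl -Hpref in Pz'.
have hd := Icyl_diam R d X f c D c01 hfX hcon hD (shift z) m _ _ Pz Pz'.
have h2 := hh m (z 0%N) _ _ (cod_X _) (cod_X _) hd.
have h3 : B * q ^+ m <= tau / 2 by apply: HN2; rewrite leq_addl.
rewrite /g z0 in h1 *.
set E := expR (psi z / alpha) in h1 *; set E' := expR (psi z' / alpha) in h1 *.
set u := derive1 (f (z' 0%N)) (coding f X (shift z)) in h2 *.
set v := derive1 (f (z' 0%N)) (coding f X (shift z')) in h2 *.
rewrite z0 -/u in h2.
have h4 := ler_dist_dist u v.
have -> : E - `|u| - (E' - `|v|) = (E - E') - (`|u| - `|v|) by ring.
apply: le_trans (ler_normB _ _) _.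
move: h1 h2 h3 h4; set a1 := `|E - E'|; set a2 := `| `|u| - `|v| |; set a3 := `|u - v|.
move=> h1 h2 h3 h4; lra.
Qed.

Lemma unif_g : exists c1, 0 < c1 /\ forall z, c1 <= g z.
Proof. exact: (unif_pos R 'I_d.+1 ord0 g g_pos g_cont). Qed.

Lemma psi_lb : exists Ps, forall z, - Ps <= psi z.
Proof.
have [Cp [th [_ HC]]] := Hpsi.
exists (Cp - psi (fun _ => ord0)) => z.
have := HC 0%N z (fun _ => ord0) (fun i => ltac:(by [])).
rewrite expr0 mulr1 ler_norml => /andP [h _]; lra.
Qed.

Lemma r_bound (c1 Ps : R) (N0 n : nat) :
  0 < c1 -> (forall z, c1 <= g z) -> (forall z, - Ps <= psi z) ->
  (forall j, (N0 <= j)%N -> B * q ^+ j <= c1 / 2) -> (N0 <= n)%N ->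
  forall xi, exists r, 0 < r /\
    (forall p, Icyl R d X f xi n p -> `|p - coding f X xi| <= r) /\
    r <= D * (expR (birkhoff psi n xi / alpha) *
       (((1 + B) / expR (- Ps / alpha)) ^+ N0 * (1 - c1 / 2) ^+ (n - N0))).
Proof.
move=> c10 Hc1 HPs HN0 nN0 xi.
pose zk k := coding f X (iter k.+1 shift xi).
pose ak k := `|derive1 (f (xi k)) (zk k)|.
pose P := \prod_(k < n) (ak k + B * q ^+ (n - k.+1)).
have ak_eq : forall k, ak k = expR (psi (iter k shift xi) / alpha) - g (iter k shift xi).
  move=> k; rewrite /g /ak /zk iter_shift addn0.
  by rewrite opprB addrC subrK.
have ak_pos : forall k, 0 < ak k.
  by move=> k; have := der_pos (iter k shift xi); rewrite iter_shift addn0.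
have h0 : forall j, 0 <= B * q ^+ j.
  by move=> j; rewrite mulr_ge0 // exprn_ge0 //; case/andP: q01.
have Hz : forall k, (k < size (pref xi n))%N ->
    (fw f (drop k.+1 (pref xi n)) @` X) (zk k).
  move=> k; rewrite size_pref => kn.
  rewrite -(subnKC kn) pref_add drop_size_cat ?size_pref //.
  exact: cod_in.
have hdist := distortion R d X f c D c01 hfX hcon hD Y (fun j => B * q ^+ j)
  (S_XY R d X Y f HS) (S_der R d X Y f HS) (S_conv R d X Y f HS) h0 hh (pref xi n) zk Hz.
have EP : \prod_(k < size (pref xi n)) (`|derive1 (f (nth ord0 (pref xi n) k)) (zk k)|
     + B * q ^+ (size (pref xi n) - k.+1)) = P.
  rewrite /P size_pref; apply: eq_bigr => k _.
  by rewrite /ak /pref nth_mkseq.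
have P0 : 0 < P.
  apply: prodr_gt0 => k _; apply: lt_le_trans (ak_pos k) _; rewrite lerDl //.
exists (D * P); split; first by rewrite mulr_gt0.
split.
  move=> p [y Xy <-]; have [x Xx ex] := cod_in xi n.
  rewrite -ex; apply: le_trans (hdist y x Xy Xx) _.
  by rewrite EP; apply: ler_wpM2r; [exact: ltW | exact: hD].
pose e k := expR (psi (iter k shift xi) / alpha).
pose rho := 1 - c1 / 2.
pose m := expR (- Ps / alpha).
pose Lam := (1 + B) / m.
pose t j := if (N0 <= j)%N then rho else Lam.
have c11 : c1 < 1 by apply: le_lt_trans (Hc1 (fun _ => ord0)) (g_lt1 _).
have m0 : 0 < m by apply: expR_gt0.
have ek1 : forall k, e k <= 1 by move=> k; exact: ltW (e_lt1 _).
have ekmin : forall k, m <= e k.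
  by move=> k; rewrite /e /m ler_expR ler_pM2r ?invr_gt0.
have m1 : m <= 1 by apply: le_trans (ekmin 0%N) (ek1 0%N).
have rho0 : 0 <= rho by rewrite /rho; lra.
have Lam1 : 1 <= Lam.
  rewrite /Lam ler_pdivlMr // mul1r; apply: le_trans m1 _; rewrite lerDl //.
have rhoLam : rho <= Lam by apply: le_trans Lam1; rewrite /rho; lra.
have fb : forall k, ak k + B * q ^+ (n - k.+1) <= e k * t (n - k.+1)%N.
  move=> k; have h1 : ak k <= e k - c1.
    by have := Hc1 (iter k shift xi); have := ak_eq k; rewrite -/(e k); lra.
  rewrite /t; case: ifP => Nk.
    have := HN0 _ Nk; have := ek1 k; rewrite /rho => h2 h3; nra.
  have hq : B * q ^+ (n - k.+1) <= B.
    by rewrite ler_piMr // exprn_ile1 //; case/andP: q01 => // ? /ltW.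
  apply: (@le_trans _ _ (1 + B)); first by have := ek1 k; lra.
  have B1 : 0 < 1 + B by apply: lt_le_trans ltr01 _; rewrite lerDl.
  rewrite /Lam mulrA ler_pdivlMr // mulrC ler_pM2r //; exact: ekmin.
have PP : P <= \prod_(k < n) (e k * t (n - k.+1)%N).
  apply: ler_prod => k _; rewrite fb andbT addr_ge0 //; exact: ltW.
rewrite big_split /= in PP.
have Ee : \prod_(k < n) e k = expR (birkhoff psi n xi / alpha).
  by rewrite /birkhoff mulr_suml expR_sum.
have Et : \prod_(k < n) t (n - k.+1)%N = \prod_(0 <= k < n) t k.
  by rewrite big_rev_mkord subn0.
have t0 : forall k, 0 <= t k by move=> k; rewrite /t; case: ifP => _ //; exact: le_trans rhoLam.
have E2 : \prod_(N0 <= k < n) t k = rho ^+ (n - N0).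
  rewrite -prodr_const_nat; apply: eq_big_nat => k /andP [Nk _].
  by rewrite /t Nk.
have E1 : \prod_(0 <= k < N0) t k <= Lam ^+ (N0 - 0).
  rewrite -prodr_const_nat; apply: ler_prod => k _; rewrite t0 /= /t.
  by case: ifP => _ //.
rewrite subn0 in E1.
have Tt : \prod_(0 <= k < n) t k <= Lam ^+ N0 * rho ^+ (n - N0).
  rewrite (@big_cat_nat _ _ _ N0) //= E2; apply: ler_wpM2r => //.
  exact: exprn_ge0.
rewrite ler_pM2l //; apply: le_trans PP _; rewrite Ee Et.
apply: ler_wpM2l; first exact: expR_ge0.
exact: Tt.
Qed.

Lemma main_est xi M delta : 0 < delta ->
  exists eta : R, 0 < `|coding f X xi - eta| < delta /\
    M < `|distrF mu (coding f X xi) - distrF mu eta| / `|coding f X xi - eta| `^ alpha.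
Proof.
move=> del0.
have [c1 [c10 Hc1]] := unif_g.
have [Ps HPs] := psi_lb.
have c11 : c1 < 1 by apply: le_lt_trans (Hc1 (fun _ => ord0)) (g_lt1 _).
have c12 : 0 < c1 / 2 by rewrite divr_gt0.
have [N0 HN0] := geo_small _ B _ _ q01 c12.
pose rho := 1 - c1 / 2.
pose Lam := (1 + B) / expR (- Ps / alpha).
have rho01 : 0 <= rho < 1 by rewrite /rho; apply/andP; split; lra.
have rho0 : 0 < rho by rewrite /rho; lra.
pose K0 := D * Lam ^+ N0 / rho ^+ N0.
have Lam0 : 0 < Lam.
  by rewrite /Lam divr_gt0 ?expR_gt0 //; apply: lt_le_trans ltr01 _; rewrite lerDl.
have K00 : 0 < K0 by rewrite /K0 divr_gt0 ?mulr_gt0 ?exprn_gt0.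
have hd2 : 0 < delta / 2 by rewrite divr_gt0.
have [N1 HN1] := geo_small _ (2 * K0) _ _ rho01 hd2.
have ra01 : 0 <= rho `^ alpha < 1.
  rewrite powR_ge0 /= /powR gt_eqF // expR_lt1 pmulr_rlt0 //.
  by apply: ln_lt0; rewrite rho0 /=; case/andP: rho01.
have [_ [_ [C [C1 HC]]]] := Hgibbs.
have C0 : 0 < C by apply: lt_le_trans ltr01 C1.
have hC4 : 0 < C^-1 / 4 by rewrite divr_gt0 // invr_gt0.
have [N2 HN2] := geo_small _ (`|M| * (2 * K0) `^ alpha) _ _ ra01 hC4.
pose n := (N0 + N1 + N2)%N.
have nN0 : (N0 <= n)%N by rewrite /n -addnA leq_addr.
have nN1 : (N1 <= n)%N by rewrite /n -addnA (leq_trans (leq_addr N2 N1)) // leq_addl.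
have nN2 : (N2 <= n)%N by rewrite /n leq_addl.
have [r [r0 [Hr rle]]] := r_bound c1 Ps N0 n c10 Hc1 HPs HN0 nN0 xi.
set S := birkhoff psi n xi in rle *.
have S0 : S <= 0 by rewrite /S /birkhoff; apply: sumr_le0 => k _; exact: ltW.
have eS1 : expR (S / alpha) <= 1.
  by rewrite -expR0 ler_expR mulr_le0_ge0 // invr_ge0 ltW.
have E : D * (expR (S / alpha) * (Lam ^+ N0 * rho ^+ (n - N0))) =
    K0 * rho ^+ n * expR (S / alpha).
  rewrite (_ : rho ^+ n = rho ^+ N0 * rho ^+ (n - N0)); last by rewrite -exprD subnKC.
  rewrite /K0; field; by rewrite expf_neq0 // gt_eqF.
rewrite E in rle; clearbody K0.
have r1 : r <= K0 * rho ^+ n.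
  apply: le_trans rle _; rewrite ger_pMr; [exact: eS1 | by rewrite mulr_gt0 // exprn_gt0].
have r2 : 2 * r < delta.
  apply: (@le_lt_trans _ _ (delta / 2)); last by rewrite ltr_pdivrMr // ltr_pMr // ltr1n.
  apply: le_trans (HN1 n nN1); rewrite -mulrA; apply: ler_wpM2l => //.
have mI : measurable (Icyl R d X f xi n).
  apply: closed_measurable.
  exact: (fw_closed R d X f c c01 hfX hcon (S_comp R d X Y f HS)).
have [et [Heta Hmass]] := mass_split R mu (Icyl R d X f xi n) (coding f X xi) r
  (Hgibbs.1) mI r0 Hr.
exists et; rewrite Heta; split.
  by rewrite mulr_gt0 //= r2.
have Y0 : 0 < (2 * r) `^ alpha by rewrite powR_gt0 // mulr_gt0.
rewrite ltr_pdivlMr //.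
have eS0 : 0 < expR S by exact: expR_gt0.
have hY : (2 * r) `^ alpha <= ((2 * K0) `^ alpha * (rho `^ alpha) ^+ n) * expR S.
  apply: (@le_trans _ _ ((2 * K0 * rho ^+ n * expR (S / alpha)) `^ alpha)).
    apply: ge0_ler_powR.
    - exact: ltW.
    - by rewrite nnegrE mulr_ge0 // ltW.
    - by rewrite nnegrE; apply: mulr_ge0; [apply: mulr_ge0; [apply: mulr_ge0 => //; exact: ltW | exact: (exprn_ge0 _ (ltW rho0))] | exact: expR_ge0].
    - by rewrite -!mulrA ler_pM2l // mulrA.
  have K0ge : 0 <= K0 := ltW K00; have rge : 0 <= rho := ltW rho0.
  rewrite !powRM ?mulr_ge0 ?exprn_ge0 ?expR_ge0 //.
  rewrite powR_exprn // -expRM divfK ?gt_eqF //.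
have h2 := HN2 n nN2; rewrite -mulrA in h2.
have s1 : M * (2 * r) `^ alpha <= `|M| * (2 * r) `^ alpha.
  by apply: ler_wpM2r; [exact: ltW | exact: ler_norm].
have s2 : `|M| * (2 * r) `^ alpha <=
    `|M| * (((2 * K0) `^ alpha * (rho `^ alpha) ^+ n) * expR S).
  by apply: ler_wpM2l; [exact: normr_ge0 | exact: hY].
have s3 : `|M| * (((2 * K0) `^ alpha * (rho `^ alpha) ^+ n) * expR S) <=
    C^-1 / 4 * expR S.
  by rewrite mulrA; apply: ler_wpM2r => //; exact: ltW.
have Ci : 0 < C^-1 by rewrite invr_gt0.
have s4 := quarter_half R _ _ Ci eS0.
have s5 : C^-1 * expR S <= fine (mu (Icyl R d X f xi n)) by have [] := HC n xi.
apply: le_lt_trans s1 _; apply: le_lt_trans s2 _; apply: le_lt_trans s3 _.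
apply: lt_le_trans s4 _; apply: le_trans _ Hmass.
by rewrite ler_pM2r ?invr_gt0.
Qed.

End Main.



Theorem lemma2p2 (R : realType) (d : nat) (X Y : set R) (f : 'I_d.+1 -> R -> R)
  (psi : (nat -> 'I_d.+1) -> R) (mu : {measure set R -> \bar R}) (alpha : R) :
  ifs_setting X Y f ->
  symb_hoelder psi ->
  (forall xi, psi xi < 0) ->
  pressure_seq psi @ \oo --> (0 : R) ->
  (forall xi, alpha * geom_pot f X xi < psi xi) ->
  gibbs_measure f X psi mu ->
  0 < alpha ->
  forall xi : nat -> 'I_d.+1, ~ eventually_01 xi ->
  forall M : R, forall delta : R, 0 < delta ->
    exists eta : R, 0 < `|coding f X xi - eta| < delta /\
      M < `|distrF mu (coding f X xi) - distrF mu eta|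
            / `|coding f X xi - eta| `^ alpha.
Proof.
move=> HS Hpsi psi_neg _ Hgeo Hgibbs al0 xi _ M delta del0.
have [c [c01 hcon]] := S_contr R d X Y f HS.
have [D [D0 hD]] := S_diam R d X Y f HS.
have [B [q [B0 [q01 hh]]]] := S_hold R d X Y f HS c D c01 D0.
exact: (main_est R d X Y f psi mu alpha c D B q HS c01 hcon D0 hD B0 q01 hh
  Hpsi psi_neg al0 Hgeo Hgibbs xi M delta del0).
Qed.
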